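(* Let $p\in\mathbb{T}^{\mathcal{P}([n])}$ be a tropical Wick vector. Then every circuit of $p$ is tropically orthogonal to every cocircuit of $p$.
   Context: $\mathbb{T}=\mathbb{R}\cup\{\infty\}$; $\mathcal{P}([n])$ the set of subsets of $[n]$. A tropical Wick vector is $p\in\mathbb{T}^{\mathcal{P}([n])}$ such that for all $S,T\subseteq[n]$ the minimum $\min_{i\in S\Delta T}(p_{S\Delta\{i\}}+p_{T\Delta\{i\}})$ is attained at least twice or equals $\infty$. Let $\mathcal{J}=\{1,\dots,n,1^*,\dots,n^*\}$ with involution $i\leftrightarrow i^*$. For $S\subseteq[n]$ its extension is the set $\bar S=S\cup\{i^*: i\in[n]\setminus S\}\subseteq\mathcal{J}$, and $\bar p_{\bar S}:=p_S$. For $T\subseteq[n]$ define $c_T\in\mathbb{T}^{\mathcal{J}}$ by $(c_T)_i=\bar p_{\bar T\Delta\{i,i^*\}}$ if $i\in\bar T$ and $\infty$ otherwise, and $c^*_T\in\mathbb{T}^{\mathcal{J}}$ by $(c^*_T)_i=\bar p_{\bar T\Delta\{i,i^*\}}$ if $i\notin\bar T$ and $\infty$ otherwise. A circuit of $p$ is a vector $c_T+\lambda\mathbf{1}$ ($T\subseteq[n]$, $\lambda\in\mathbb{R}$) with nonempty support (support = set of coordinates $\neq\infty$); a cocircuit of $p$ is a vector $c^*_T+\lambda\mathbf{1}$ with nonempty support. Two vectors $x,y\in\mathbb{T}^N$ are tropically orthogonal if $\min_k(x_k+y_k)$ is attained at least twice or equals $\infty$. *)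

(* Defs.v *)
(* Tropical numbers T = R ∪ {∞} over a real field R,
   encoded as option R with None = ∞. *)
From HB Require Import structures.
From mathcomp Require Import all_boot all_order all_algebra.
Set Implicit Arguments. Unset Strict Implicit. Unset Printing Implicit Defensive.
Import Order.TTheory GRing.Theory Num.Theory.
Local Open Scope ring_scope.

Section Trop.
Variable R : realFieldType.

Definition trop := option R.

(* tropical multiplication = ordinary sum, ∞ absorbing *)
Definition tadd (a b : trop) : trop :=
  match a, b with Some x, Some y => Some (x + y) | _, _ => None end.

Definition tle (a b : trop) : bool :=
  match a, b with
  | _, None => true
  | None, Some _ => false
  | Some x, Some y => x <= y
  end.

Definition min_twice_or_inf (I : finType) (A : {set I}) (f : I -> trop) : Prop :=
  (forall i, i \in A -> f i = None) \/
  exists i j, [/\ i \in A, j \in A, i != j, f i = f j &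
                  forall k, k \in A -> tle (f i) (f k)].

Definition symdiff (I : finType) (A B : {set I}) : {set I} := (A :\: B) :|: (B :\: A).

Variable n : nat.

Definition tvec := {set 'I_n} -> trop.

Definition tropical_Wick (p : tvec) : Prop :=
  forall S T : {set 'I_n},
    min_twice_or_inf (symdiff S T) (fun i => tadd (p (symdiff S [set i])) (p (symdiff T [set i]))).

(* J = {1..n, 1*..n*}: inl i is i, inr i is i* *)
Definition J := ('I_n + 'I_n)%type.

Definition star (j : J) : J :=
  match j with inl i => inr i | inr i => inl i end.

Definition ext (S : {set 'I_n}) : {set J} :=
  [set inl i | i in S] :|: [set inr i | i in ~: S].

(* \bar p, defined on extensions (∞ elsewhere; never used there) *)
Definition pbar (p : tvec) (X : {set J}) : trop :=
  match [pick U | ext U == X] with Some U => p U | None => None end.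

Definition circ_vec (p : tvec) (T : {set 'I_n}) (j : J) : trop :=
  if j \in ext T then pbar p (symdiff (ext T) [set j; star j]) else None.

Definition cocirc_vec (p : tvec) (T : {set 'I_n}) (j : J) : trop :=
  if j \notin ext T then pbar p (symdiff (ext T) [set j; star j]) else None.

Definition support (x : J -> trop) : {set J} := [set j | x j != None].

Definition is_circuit (p : tvec) (x : J -> trop) : Prop :=
  (exists (T : {set 'I_n}) (lam : R), forall j, x j = tadd (circ_vec p T j) (Some lam))
  /\ support x != set0.

Definition is_cocircuit (p : tvec) (x : J -> trop) : Prop :=
  (exists (T : {set 'I_n}) (lam : R), forall j, x j = tadd (cocirc_vec p T j) (Some lam))
  /\ support x != set0.

Definition trop_orthogonal (x y : J -> trop) : Prop :=
  min_twice_or_inf [set: J] (fun k => tadd (x k) (y k)).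

End Trop.

(* Main.v *)
Require Import Defs.
From mathcomp Require Import all_boot all_order all_algebra.
Set Implicit Arguments. Unset Strict Implicit. Unset Printing Implicit Defensive.
Import Order.TTheory GRing.Theory Num.Theory.
Local Open Scope ring_scope.

Section Aux.
Variable R : realFieldType.
Variable n : nat.

Definition idx (j : J n) : 'I_n := match j with inl i => i | inr i => i end.
Definition eT (T : {set 'I_n}) (i : 'I_n) : J n := if i \in T then inl i else inr i.

Lemma mem_ext (T : {set 'I_n}) (j : J n) :
  (j \in ext T) = match j with inl i => i \in T | inr i => i \notin T end.
Proof.
rewrite /ext inE; case: j => i.
- apply/orP/idP => [[/imsetP [k Hk [->]] //|/imsetP [k _] //]|H].
  by left; apply/imsetP; exists i.
- apply/orP/idP => [[/imsetP [k _] //|/imsetP [k Hk [->]]]|H]; first by rewrite inE in Hk.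
  by right; apply/imsetP; exists i; rewrite ?inE.
Qed.

Lemma ext_inj : injective (@ext n).
Proof.
move=> U V H; apply/setP => i.
by have := mem_ext U (inl i); rewrite H mem_ext.
Qed.

Lemma pbar_ext (p : tvec R n) V : pbar p (ext V) = p V.
Proof.
rewrite /pbar; case: pickP => [U /eqP H|H]; first by rewrite (ext_inj H).
by have := H V; rewrite eqxx.
Qed.

Lemma symdiff_ext (T : {set 'I_n}) (j : J n) :
  symdiff (ext T) [set j; star j] = ext (symdiff T [set idx j]).
Proof.
apply/setP => k; rewrite /symdiff in_setU !in_setD !mem_ext !inE.
case: k => k; case: j => i /=; rewrite !inE;
  case: (k =P i) => [->|Hki] /=; rewrite ?eqxx /=; try by case: (_ \in T).
all: try (by rewrite (introF eqP Hki) /= ?orbF; case: (_ \in T)).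
all: rewrite ?(inj_eq (@inl_inj _ _)) ?(inj_eq (@inr_inj _ _)); try (by rewrite (introF eqP Hki) /= ?orbF; case: (_ \in T)).
all: idtac.
Qed.

Lemma ext_eT (T : {set 'I_n}) (j : J n) : (j \in ext T) = (j == eT T (idx j)).
Proof. rewrite mem_ext /eT; case: j => i /=; case: ifP => H //=; by rewrite ?H ?eqxx. Qed.

Lemma eT_ext (T U : {set 'I_n}) i : (eT T i \in ext U) = ((i \in T) == (i \in U)).
Proof. rewrite /eT; case: ifP => H; rewrite mem_ext /= ?H //; by case: (i \in U). Qed.

Lemma idx_eT T i : idx (eT T i) = i.
Proof. by rewrite /eT; case: ifP. Qed.

Lemma in_symdiff (T U : {set 'I_n}) i : (i \in symdiff T U) = ((i \in T) != (i \in U)).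
Proof. by rewrite /symdiff !inE; case: (i \in T); case: (i \in U). Qed.

Lemma tle_shift (a b : trop R) c : tle a b -> tle (tadd a (Some c)) (tadd b (Some c)).
Proof. by case: a; case: b => //= x y; rewrite lerD2r. Qed.

Lemma tadd4 (a b : trop R) l m :
  tadd (tadd a (Some l)) (tadd b (Some m)) = tadd (tadd a b) (Some (l + m)).
Proof. by case: a; case: b => //= x y; congr Some; rewrite addrACA. Qed.
Lemma eT_eq (T U : {set 'I_n}) i : (eT T i != eT U i) = ((i \in T) != (i \in U)).
Proof. by rewrite /eT; do 2 case: ifP => _ //=; rewrite ?eqxx. Qed.
End Aux.

Theorem proposition6p4 (R : realFieldType) (n : nat) (p : tvec R n) :
  tropical_Wick p ->
  forall x y : J n -> trop R,
    is_circuit p x -> is_cocircuit p y -> trop_orthogonal x y.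
Proof.
move=> W x y [[T [l Hx]] _] [[U [m Hy]] _].
have fE : forall k, tadd (x k) (y k) =
  if (k == eT T (idx k)) && (idx k \in symdiff T U) then
    tadd (tadd (p (symdiff T [set idx k])) (p (symdiff U [set idx k]))) (Some (l + m))
  else None.
  move=> k; rewrite Hx Hy /circ_vec /cocirc_vec !symdiff_ext !pbar_ext !ext_eT.
  have [->|Hk] /= := eqP; last by [].
  rewrite !idx_eT in_symdiff eT_eq.
  case: (_ \in T); case: (_ \in U) => /=; rewrite ?tadd4 //;
    by case: (p _) => [?|] //=; case: (p _).
rewrite /trop_orthogonal.
case: (W T U) => [Hall|[i [j [Hi Hj Hij Heq Hmin]]]].
  left => k _; rewrite fE.
  case: ifP => // /andP [_ Hk]; by rewrite (Hall _ Hk).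
right; exists (eT T i), (eT T j); split => //.
- apply: contra Hij => /eqP H; apply/eqP.
  by rewrite -(idx_eT T i) H idx_eT.
- by rewrite !fE !idx_eT !eqxx Hi Hj /= Heq.
- move=> k _; rewrite (fE k) fE idx_eT eqxx Hi /=.
  case: ifP => [/andP [_ Hk]|_]; last by case: (tadd _ _).
  exact: tle_shift (Hmin _ Hk).
Qed.
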